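(* Let $d\ge 2$ and $F\in(0,1)$, and let $\rho_{\mathrm{dp}}(F)=F|\mathrm{GHZ}_d\rangle\langle\mathrm{GHZ}_d|+\frac{1-F}{2^d-1}\big(I-|\mathrm{GHZ}_d\rangle\langle\mathrm{GHZ}_d|\big)$ be the $d$-qubit depolarized GHZ state, where $|\mathrm{GHZ}_d\rangle=(|0\cdots0\rangle+|1\cdots1\rangle)/\sqrt2$. Let $C(F)=\sum_s\frac{4\lambda^+_s\lambda^-_s}{\lambda^+_s+\lambda^-_s}$ be computed from the eigenvalues $\lambda^\pm_s$ of $\rho_{\mathrm{dp}}(F)$ on the GHZ basis states $|G^\pm_s\rangle$, and let $\eta(F)=d(1-C(F))$. Define $$F_{\mathrm{th,dp}}=2^{-d}+\frac{(2^d-1)\left(2^d-2+\sqrt{(2^d-2)^2+2^{d+3}d}\right)}{2^{2d+1}d}.$$ Then $\eta(F)>1$ if and only if $F>F_{\mathrm{th,dp}}$.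
   Context: GHZ basis on $d$ qubits: for a bit string $s\in\{0,1\}^d$ with complement $\bar s$, and one representative $s$ chosen from each pair $\{s,\bar s\}$, set $|G^\pm_s\rangle=(|s\rangle\pm|\bar s\rangle)/\sqrt2$; these $2^d$ states form an orthonormal basis and $\rho_{\mathrm{dp}}(F)$ is diagonal in it, with eigenvalue $\lambda^\pm_s$ on $|G^\pm_s\rangle$; the sum defining $C$ runs over the $2^{d-1}$ representatives. Interpretation: $\eta(F)$ is the ratio of the quantum Fisher information $d(1-C)$ for estimating $\theta_1=\frac{1}{\sqrt d}\sum_{i}x_i$ (with the phases $x_i$ encoded by $U(x)=\exp[-\frac{i}{2}\sum_i x_i\sigma_z^{(i)}]$) to the value $1$ achieved by the optimal local strategy, so $\eta>1$ means quantum advantage. *)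

(* Defs.v *)
From HB Require Import structures.
From mathcomp Require Import all_boot all_order all_algebra.
Set Implicit Arguments. Unset Strict Implicit. Unset Printing Implicit Defensive.
Import Order.TTheory GRing.Theory Num.Theory.
Local Open Scope ring_scope.

(* Computational basis of d qubits: bit strings s : {0,..,d-1} -> {0,1}. *)
Definition bits (d : nat) := {ffun 'I_d -> bool}.

Section GHZ.
Variable R : rcfType.
Variable d : nat.

Definition ket (s : bits d) : bits d -> R := fun x => (x == s)%:R.
Definition bcompl (s : bits d) : bits d := [ffun i => ~~ s i].
Definition zeros : bits d := [ffun _ => false].

Definition isqrt2 : R := (Num.sqrt 2)^-1.

Definition Gplus (s : bits d) : bits d -> R :=
  fun x => isqrt2 * (ket s x + ket (bcompl s) x).
Definition Gminus (s : bits d) : bits d -> R :=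
  fun x => isqrt2 * (ket s x - ket (bcompl s) x).

Definition GHZ : bits d -> R := Gplus zeros.

Definition rho_dp (F : R) : bits d -> bits d -> R :=
  fun x y => F * (GHZ x * GHZ y)
    + (1 - F) / ((2 ^+ d) - 1) * ((x == y)%:R - GHZ x * GHZ y).

(* eigenvalue of a (symmetric) matrix on a unit eigenvector v : <v|rho|v> *)
Definition eigval_on (M : bits d -> bits d -> R) (v : bits d -> R) : R :=
  \sum_(x : bits d) \sum_(y : bits d) v x * M x y * v y.

Definition lam_plus (F : R) (s : bits d) : R := eigval_on (rho_dp F) (Gplus s).
Definition lam_minus (F : R) (s : bits d) : R := eigval_on (rho_dp F) (Gminus s).

(* one representative from each pair {s, s̄}: the one whose first bit is 0 *)
Definition representative (s : bits d) : bool :=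
  [forall i : 'I_d, (val i == 0)%N ==> ~~ s i].

Definition C_dp (F : R) : R :=
  \sum_(s : bits d | representative s)
     4 * lam_plus F s * lam_minus F s / (lam_plus F s + lam_minus F s).

Definition eta_dp (F : R) : R := d%:R * (1 - C_dp F).

Definition F_th_dp : R :=
  (2 ^+ d)^-1 +
  ((2 ^+ d - 1) * (2 ^+ d - 2 + Num.sqrt ((2 ^+ d - 2) ^+ 2 + 2 ^+ (d + 3) * d%:R)))
  / (2 ^+ (2 * d + 1) * d%:R).

End GHZ.

(* Main.v *)
Require Import Defs.
From HB Require Import structures.
From mathcomp Require Import all_boot all_order all_algebra.
From mathcomp Require Import ring lra zify.
Set Implicit Arguments. Unset Strict Implicit. Unset Printing Implicit Defensive.
Import Order.TTheory GRing.Theory Num.Theory.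
Local Open Scope ring_scope.

Definition ip (R : rcfType) d (u v : bits d -> R) := \sum_x u x * v x.

Lemma eigval_ip (R : rcfType) d F (v : bits d -> R) :
  eigval_on (@rho_dp R d F) v =
  F * (ip v (@GHZ R d))^+2 + (1 - F) / (2 ^+ d - 1) * (ip v v - (ip v (@GHZ R d))^+2).
Proof.
rewrite /eigval_on /rho_dp /ip.
set q := (1 - F) / (2 ^+ d - 1).
set G := @GHZ R d.
transitivity (\sum_x \sum_y ((F - q) * ((v x * G x) * (v y * G y)) + q * ((x == y)%:R * v x * v y))).
  by apply eq_bigr => x _; apply eq_bigr => y _; ring.
rewrite (eq_bigr (fun x => (F - q) * ((v x * G x) * \sum_y (v y * G y)) + q * (v x * v x))); last first.
  move=> x _; rewrite big_split /=; congr (_ + _).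
    by rewrite -mulr_sumr [v x * G x * _]mulr_sumr.
  rewrite -mulr_sumr; congr (_ * _).
  rewrite (bigD1 x) //= eqxx big1 ?addr0; first by rewrite mul1r.
  by move=> y /negbTE; rewrite eq_sym => ->; rewrite !mul0r.
rewrite big_split /= -!mulr_sumr -mulr_suml expr2.
ring.
Qed.
Lemma bcomplK d : cancel (@bcompl d) (@bcompl d).
Proof. by move=> s; apply/ffunP => i; rewrite !ffunE negbK. Qed.

Lemma bcompl_inj d : injective (@bcompl d).
Proof. exact: can_inj (@bcomplK d). Qed.

Lemma bcompl_eq d (a b : bits d) : (bcompl a == b) = (a == bcompl b).
Proof. by rewrite -{1}(bcomplK b) (inj_eq (@bcompl_inj d)). Qed.

Lemma bcompl_neq d (s : bits d) : (0 < d)%N -> (s == bcompl s) = false.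
Proof.
move=> d0; apply/negbTE/eqP => /ffunP /(_ (Ordinal d0)); rewrite ffunE.
by case: (s _).
Qed.

Lemma sum_ket (R : rcfType) d (a : bits d) (f : bits d -> R) :
  \sum_x ket R a x * f x = f a.
Proof.
rewrite (bigD1 a) //= /ket eqxx mul1r big1 ?addr0 // => x /negbTE ->.
by rewrite mul0r.
Qed.

Lemma isqrt2_sq (R : rcfType) : isqrt2 R ^+ 2 = 2^-1.
Proof. by rewrite /isqrt2 exprVn sqr_sqrtr // ler0n. Qed.

Lemma ip_gen (R : rcfType) d (a b : bits d) (sg tau : R) :
  \sum_x (isqrt2 R * (ket R a x + sg * ket R (bcompl a) x)) *
         (isqrt2 R * (ket R b x + tau * ket R (bcompl b) x))
  = 2^-1 * ((a == b)%:R + tau * (a == bcompl b)%:R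
            + sg * (bcompl a == b)%:R + sg * tau * (bcompl a == bcompl b)%:R).
Proof.
set g := fun x => ket R b x + tau * ket R (bcompl b) x.
transitivity (isqrt2 R ^+ 2 * (\sum_x ket R a x * g x + sg * \sum_x ket R (bcompl a) x * g x)).
  rewrite [sg * _]mulr_sumr -big_split /= mulr_sumr; apply eq_bigr => x _.
  rewrite /g; ring.
rewrite !sum_ket isqrt2_sq /g /ket; ring.
Qed.
Lemma pow_ge (d : nat) : (2 <= d)%N -> (d + 2 <= 2 ^ d)%N.
Proof.
elim: d => [|d IH] //; rewrite ltnS leq_eqVlt => /orP [/eqP <- //|/IH h].
rewrite expnS; lia.
Qed.

Lemma alg_main (R : rcfType) (x N F S : R) :
  2 <= x -> x + 2 <= N -> 0 < F -> F < 1 ->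
  S = Num.sqrt ((N - 2) ^+ 2 + N * 8 * x) ->
  let q := (1 - F) / (N - 1) in
  let C := 4 * F * q / (F + q) + q * (N - 2) in
  (1 < x * (1 - C) <-> N^-1 + (N - 1) * (N - 2 + S) / (N ^+ 2 * 2 * x) < F).
Proof.
move=> x2 xN F0 F1 SE q C.
have N1 : 0 < N - 1 by lra.
have Apos : 0 < 1 + (N - 2) * F by nra.
have Fq : F + q = (1 + (N - 2) * F) / (N - 1).
  by rewrite /q; field; lra.
have Fq0 : F + q != 0.
  by rewrite Fq; apply/lt0r_neq0/divr_gt0.
set g := x * N ^+ 2 * F ^+ 2 - (2 * x * N + (N - 1) * (N - 2)) * F + (x - N + 1).
have E1 : x * (1 - C) - 1 = g / ((N - 1) * (1 + (N - 2) * F)).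
  rewrite /C /g /q; field.
  by rewrite lt0r_neq0 // lt0r_neq0.
have S0 : 0 <= S by rewrite SE sqrtr_ge0.
have S2 : S ^+ 2 = (N - 2) ^+ 2 + N * 8 * x.
  by rewrite SE sqr_sqrtr //; nra.
set B := 2 * x * N + (N - 1) * (N - 2).
have B0 : 0 < B.
  have h1 : 0 <= (N - 1) * (N - 2) by apply: mulr_ge0; lra.
  have h2 : 0 < x * N by apply: mulr_gt0; lra.
  rewrite /B; lra.
have SB : B < (N - 1) * S.
  have : B ^+ 2 < ((N - 1) * S) ^+ 2.
    rewrite exprMn S2 -subr_gt0.
    have -> : (N - 1) ^+ 2 * ((N - 2) ^+ 2 + N * 8 * x) - B ^+ 2
       = 4 * x * N ^+ 2 * (N - 1 - x) by rewrite /B; ring.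
    apply: mulr_gt0; last lra.
    apply: mulr_gt0; last by apply: exprn_gt0; lra.
    lra.
  rewrite (@ltr_pXn2r _ 2) // nnegrE ?mulr_ge0 //; [lra|lra].
have x0 : 0 < x by lra.
have N0 : 0 < N by lra.
set r1 := N^-1 + (N - 1) * (N - 2 + S) / (N ^+ 2 * 2 * x).
set r2 := (B - (N - 1) * S) / (2 * x * N ^+ 2).
have r1E : r1 = (B + (N - 1) * S) / (2 * x * N ^+ 2).
  rewrite /r1 /B; field; rewrite lt0r_neq0 // lt0r_neq0 //.
have E2 : x * N ^+ 2 * (F - r1) * (F - r2) =
   g - (N - 1) ^+ 2 / (4 * x * N ^+ 2) * (S ^+ 2 - ((N - 2) ^+ 2 + N * 8 * x)).
  rewrite r1E /r2 /g /B; field; rewrite lt0r_neq0 // lt0r_neq0 //.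
rewrite S2 subrr mulr0 subr0 in E2.
have r20 : r2 < 0.
  rewrite /r2 pmulr_llt0 ?invr_gt0 ?subr_lt0 //.
  by apply: mulr_gt0; [apply: mulr_gt0 | apply: exprn_gt0].
have Fr2 : 0 < F - r2 by lra.
rewrite -subr_gt0 E1 pmulr_lgt0 ?invr_gt0 ?mulr_gt0 // -E2.
have -> : (r1 < F) = (0 < F - r1) by rewrite subr_gt0.
rewrite -mulrA.
rewrite pmulr_rgt0; last by apply: mulr_gt0 => //; apply: exprn_gt0.
by rewrite pmulr_lgt0.
Qed.
Lemma ip_pp (R : rcfType) d (a b : bits d) :
  ip (Gplus R a) (Gplus R b) = 2^-1 * ((a == b)%:R + (a == bcompl b)%:R
            + (bcompl a == b)%:R + (bcompl a == bcompl b)%:R).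
Proof.
rewrite /ip /Gplus (eq_bigr (fun x => (isqrt2 R * (ket R a x + 1 * ket R (bcompl a) x)) *
         (isqrt2 R * (ket R b x + 1 * ket R (bcompl b) x)))); last by move=> x _; rewrite !mul1r.
rewrite ip_gen; ring.
Qed.

Lemma ip_mp (R : rcfType) d (a b : bits d) :
  ip (Gminus R a) (Gplus R b) = 2^-1 * ((a == b)%:R + (a == bcompl b)%:R
            - (bcompl a == b)%:R - (bcompl a == bcompl b)%:R).
Proof.
rewrite /ip /Gplus /Gminus (eq_bigr (fun x => (isqrt2 R * (ket R a x + (-1) * ket R (bcompl a) x)) *
         (isqrt2 R * (ket R b x + 1 * ket R (bcompl b) x)))); last by move=> x _; ring.
rewrite ip_gen; ring.
Qed.

Lemma ip_mm (R : rcfType) d (a b : bits d) :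
  ip (Gminus R a) (Gminus R b) = 2^-1 * ((a == b)%:R - (a == bcompl b)%:R
            - (bcompl a == b)%:R + (bcompl a == bcompl b)%:R).
Proof.
rewrite /ip /Gplus /Gminus (eq_bigr (fun x => (isqrt2 R * (ket R a x + (-1) * ket R (bcompl a) x)) *
         (isqrt2 R * (ket R b x + (-1) * ket R (bcompl b) x)))); last by move=> x _; ring.
rewrite ip_gen; ring.
Qed.

Lemma lam_minus_val (R : rcfType) d (F : R) (s : bits d) : (0 < d)%N ->
  lam_minus F s = (1 - F) / (2 ^+ d - 1).
Proof.
move=> d0; rewrite /lam_minus eigval_ip /GHZ ip_mp ip_mm.
rewrite !bcompl_eq !bcomplK ?bcompl_neq // ?eqxx.
set u := (s == zeros d)%:R; set w := (s == bcompl (zeros d))%:R.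
set z := (1 - F) / _.
rewrite /=; by field.
Qed.

Lemma rep_i0 d (d0 : (0 < d)%N) (s : bits d) : representative s = ~~ s (Ordinal d0).
Proof.
apply/forallP/idP => [/(_ (Ordinal d0)) //|h i]; apply/implyP => /eqP i0.
by have -> : i = Ordinal d0 by apply: val_inj.
Qed.

Lemma lam_plus_val (R : rcfType) d (F : R) (s : bits d) : (0 < d)%N ->
  representative s ->
  lam_plus F s = if s == zeros d then F else (1 - F) / (2 ^+ d - 1).
Proof.
move=> d0 rs; rewrite /lam_plus eigval_ip /GHZ !ip_pp.
rewrite !bcompl_eq !bcomplK ?bcompl_neq // ?eqxx.
have -> : (s == bcompl (zeros d)) = false.
  apply/negbTE/eqP => e; move: rs; rewrite (rep_i0 d0) e ffunE /zeros ffunE //.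
set z := (1 - F) / _.
case: eqP => _ /=; by field.
Qed.
Lemma rep_compl d (d0 : (0 < d)%N) (s : bits d) :
  representative (bcompl s) = ~~ representative s.
Proof. by rewrite !(rep_i0 d0) ffunE. Qed.

Lemma rep_zeros d : representative (zeros d).
Proof. by apply/forallP => i; rewrite /zeros ffunE implybT. Qed.

Lemma count_rep (R : rcfType) d (d0 : (0 < d)%N) :
  \sum_(s : bits d | representative s && (s != zeros d)) (1 : R) = 2^-1 * 2 ^+ d - 1.
Proof.
have tot : \sum_(s : bits d) (1 : R) = 2 ^+ d.
  by rewrite sumr_const card_ffun card_bool card_ord natrX.
have sw : \sum_(s : bits d | ~~ representative s) (1 : R) =
          \sum_(s : bits d | representative s) (1 : R).
  rewrite (reindex_inj (@bcompl_inj d)) /=; apply: eq_bigl => s.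
  by rewrite rep_compl // negbK.
rewrite (bigID (@representative d)) /= sw in tot.
have : \sum_(s : bits d | representative s) (1 : R) = 2^-1 * 2 ^+ d.
  rewrite -tot; by field.
move=> h; rewrite (@bigD1 _ _ _ _ (zeros d)) /= ?rep_zeros // in h.
rewrite -[LHS](addKr 1) h; ring.
Qed.

Lemma C_val (R : rcfType) d (F : R) (d0 : (0 < d)%N) :
  let q := (1 - F) / (2 ^+ d - 1) in q != 0 -> F + q != 0 ->
  C_dp d F = 4 * F * q / (F + q) + q * (2 ^+ d - 2).
Proof.
move=> q q0 Fq0.
rewrite /C_dp (bigD1 (zeros d)) ?rep_zeros //=.
rewrite lam_plus_val ?rep_zeros // lam_minus_val // eqxx.
rewrite (eq_bigr (fun _ => 2 * q * 1)); last first.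
  move=> s /andP [rs ns]; rewrite lam_plus_val // (negbTE ns) lam_minus_val //.
  rewrite -/q; field.
  by rewrite -mulr2n mulrn_eq0 (negbTE q0).
rewrite -mulr_sumr count_rep //; rewrite -/q.
by field.
Qed.

Theorem mainTheorem2 (R : rcfType) (d : nat) (F : R) :
  (2 <= d)%N -> 0 < F -> F < 1 ->
  (1 < eta_dp d F <-> F_th_dp R d < F).
Proof.
move=> d2 F0 F1.
have d0 : (0 < d)%N by apply: leq_trans d2.
have hN : d%:R + 2 <= (2 : R) ^+ d.
  by have := pow_ge d2; rewrite -(ler_nat R) natrD natrX.
have hx : 2 <= d%:R :> R by rewrite (ler_nat R 2 d).
have q0 : 0 < (1 - F) / ((2 : R) ^+ d - 1) by apply: divr_gt0; lra.
rewrite /eta_dp C_val //; last 2 first.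
- exact: lt0r_neq0.
- apply: lt0r_neq0; lra.
have e1 : (2 : R) ^+ (d + 3) = 2 ^+ d * 8 by rewrite exprD; ring.
have e2 : (2 : R) ^+ (2 * d + 1) = (2 ^+ d) ^+ 2 * 2 by rewrite exprD mulnC exprM expr1.
rewrite /F_th_dp e1 e2.
by apply: alg_main.
Qed.
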